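(* $(\mathfrak{P}(X),\preceq)$ is a bounded graded poset with minimum element $\{(\{x\},\emptyset):x\in X\}$ and maximum element $\{(X,\emptyset)\}$. Its height function is $h:\mathfrak{P}(X)\to\{0,1,\dots,|X|-1\}$, $h(\mathcal{S})=|X|-|\mathcal{P}(\mathcal{S})|+|\mathcal{H}(\mathcal{S})|$.
   Context: Let $X$ be a finite non-empty set. A set pair system on $X$ is a set of ordered pairs $(S,H)$ of subsets of $X$ with $S\ne\emptyset$ and $S\cap H=\emptyset$. On set pairs, $(S_1,H_1)\le(S_2,H_2)$ iff they are equal or one of: $S_1\cup H_1\subseteq S_2$; $S_1\cup H_1\subseteq H_2$; $S_1\subsetneq S_2$ and $H_1=H_2\ne\emptyset$. For set pair systems, $\mathcal{S}_1\preceq\mathcal{S}_2$ iff (SP1) for every $(S_1,H_1)\in\mathcal{S}_1$ there is $(S_2,H_2)\in\mathcal{S}_2$ with $(S_1,H_1)\le(S_2,H_2)$, and (SP2) for every $(S_2,H_2)\in\mathcal{S}_2$ with $H_2\ne\emptyset$, if some $(S_1,H_1)\in\mathcal{S}_1$ has $H_1=H_2$ then some such $(S_1,H_1)$ satisfies $(S_1,H_1)\le(S_2,H_2)$. A polestar system is a set pair system $\mathcal{S}$ with (PL1) $\mathcal{P}(\mathcal{S})=\{S:(S,H)\in\mathcal{S}\}$ is a partition of $X$; (PL2) distinct $(S,H),(S',H')\in\mathcal{S}$ have $S\ne S'$; (PL3) for each $(S,H)\in\mathcal{S}$ with $H\ne\emptyset$, $(H,\emptyset)\in\mathcal{S}$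 and there is exactly one $(S',H')\in\mathcal{S}$ with $(S',H')\ne(S,H)$ and $H'=H$. $\mathcal{H}(\mathcal{S})=\{H:(S,H)\in\mathcal{S},H\ne\emptyset\}$; $\mathfrak{P}(X)$ is the set of polestar systems on $X$. A poset is bounded if it has a minimum and a maximum; a chain is a non-empty set of pairwise comparable elements, of length (number of elements minus one); the poset is graded if all maximal chains have the same length; its height function assigns to $a$ the maximum length of a chain all of whose elements are $\le a$. *)

(* Defs.v *)
From mathcomp Require Import all_boot.
Set Implicit Arguments. Unset Strict Implicit. Unset Printing Implicit Defensive.

(* X is modelled by a finite type T (nonemptiness is a hypothesis of the theorem). *)
Section Polestar.
Variable T : finType.

Definition setpair := ({set T} * {set T})%type.
Definition sps := {set setpair}.

Definition sp_le (p q : setpair) : bool :=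
  [|| p == q,
      (p.1 :|: p.2) \subset q.1,
      (p.1 :|: p.2) \subset q.2
    | [&& p.1 \proper q.1, p.2 == q.2 & p.2 != set0]].

Definition sps_le (A B : sps) : bool :=
  [forall p in A, exists q in B, sp_le p q] &&
  [forall q in B, (q.2 != set0) ==>
     ([exists p in A, p.2 == q.2] ==>
      [exists p in A, (p.2 == q.2) && sp_le p q])].

Definition is_sps (A : sps) : bool :=
  [forall p in A, (p.1 != set0) && [disjoint p.1 & p.2]].

Definition Pof (A : sps) : {set {set T}} := [set p.1 | p in A].
Definition Hof (A : sps) : {set {set T}} := [set p.2 | p in A & p.2 != set0].

Definition polestar (A : sps) : bool :=
  [&& is_sps A,
      partition (Pof A) [set: T],
      [forall p in A, forall q in A, (p.1 == q.1) ==> (p == q)]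
    & [forall p in A, (p.2 != set0) ==>
         (((p.2, set0) \in A) &&
          (#|[set q in A | (q != p) && (q.2 == p.2)]| == 1))]].

Definition is_chain (C : {set sps}) : Prop :=
  C != set0 /\ (forall A, A \in C -> polestar A) /\
  (forall A B, A \in C -> B \in C -> sps_le A B \/ sps_le B A).

Definition chain_length (C : {set sps}) : nat := #|C|.-1.

Definition maximal_chain (C : {set sps}) : Prop :=
  is_chain C /\ (forall C', is_chain C' -> C \subset C' -> C' = C).

Definition graded : Prop :=
  forall C1 C2, maximal_chain C1 -> maximal_chain C2 ->
    chain_length C1 = chain_length C2.

Definition is_height (a : sps) (n : nat) : Prop :=
  (exists C, [/\ is_chain C, (forall b, b \in C -> sps_le b a) & chain_length C = n]) /\
  (forall C, is_chain C -> (forall b, b \in C -> sps_le b a) -> chain_length C <= n).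

Definition min_sys : sps := [set ([set x], set0) | x : T].
Definition max_sys : sps := [set ([set: T], set0)].

Definition hfun (A : sps) : nat := #|T| - #|Pof A| + #|Hof A|.

End Polestar.

(* Main.v *)
Require Import Defs.
From mathcomp Require Import all_boot zify.
From Stdlib Require Import Classical.
Set Implicit Arguments. Unset Strict Implicit. Unset Printing Implicit Defensive.

Section Proof.
Variable T : finType.
Implicit Types (A B C : sps T) (p q r : setpair T) (X Y : {set T}).

Definition pole A X := [exists q in A, (q.2 != set0) && (q.2 == X)].
Definition NP A := [set p in A | ~~ pole A p.1].

Record pstar A : Prop := PStar {
  ps_ne : forall p, p \in A -> p.1 != set0;
  ps_dis : forall p, p \in A -> [disjoint p.1 & p.2];
  ps_cov : forall x, exists2 p, p \in A & x \in p.1;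
  ps_uniq : forall p q x, p \in A -> q \in A -> x \in p.1 -> x \in q.1 -> p = q;
  ps_pole : forall p, p \in A -> p.2 != set0 -> (p.2, set0) \in A;
  ps_mate : forall p, p \in A -> p.2 != set0 ->
     exists q, [/\ q \in A, q != p, q.2 = p.2 &
        forall r, r \in A -> r != p -> r.2 = p.2 -> r = q]
}.

Lemma polestarP A : polestar A <-> pstar A.
Proof.
split.
- case/and4P => /forall_inP hs /and3P [/eqP hcov /trivIsetP htriv h0]
     /forall_inP hPL2 /forall_inP hPL3.
  have uniq : forall p q x, p \in A -> q \in A -> x \in p.1 -> x \in q.1 -> p = q.
    move=> p q x pA qA xp xq.
    have e1 : p.1 = q.1.
      apply/eqP; apply: contraTT isT => ne.
      have := htriv _ _ (imset_f (fun p : setpair T => p.1) pA)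
                        (imset_f (fun p : setpair T => p.1) qA) ne.
      by move/disjointFr => /(_ _ xp); rewrite xq.
    by have := hPL2 _ pA => /forall_inP /(_ _ qA); rewrite e1 eqxx => /eqP.
  constructor.
  + by move=> p /hs /andP [].
  + by move=> p /hs /andP [].
  + move=> x; have : x \in cover (Pof A) by rewrite hcov inE.
    by case/bigcupP => S /imsetP [p pA ->] xS; exists p.
  + exact: uniq.
  + by move=> p /hPL3 /implyP h /h /andP [].
  + move=> p pA ne; have := hPL3 _ pA; rewrite ne /= => /andP [_ /cards1P [q eq]].
    have : q \in [set q0 in A | (q0 != p) && (q0.2 == p.2)] by rewrite eq set11.
    rewrite inE => /and3P [qA qp /eqP q2]; exists q; split => //.
    move=> r rA rp r2.
    have : r \in [set q0 in A | (q0 != p) && (q0.2 == p.2)] by rewrite inE rA rp r2 eqxx.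
    by rewrite eq inE => /eqP.
- case => hne hdis hcov huniq hpole hmate.
  apply/and4P; split.
  + by apply/forall_inP => p pA; rewrite hne ?hdis.
  + apply/and3P; split.
    * apply/eqP/setP => x; rewrite inE; apply/bigcupP.
      by have [p pA xp] := hcov x; exists p.1 => //; apply: imset_f.
    * apply/trivIsetP => S1 S2 /imsetP [p pA ->] /imsetP [q qA ->] ne.
      rewrite -setI_eq0; apply/eqP/setP => x; rewrite !inE.
      apply/negP => /andP [xp xq]; move: ne; by rewrite (huniq _ _ _ pA qA xp xq) eqxx.
    * by apply/imsetP => [[p pA e]]; move: (hne _ pA); rewrite -e eqxx.
  + apply/forall_inP => p pA; apply/forall_inP => q qA; apply/implyP => /eqP e.
    have [x xp] := set0Pn _ (hne _ pA).
    by rewrite (huniq _ _ x pA qA) // -e.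
  + apply/forall_inP => p pA; apply/implyP => ne; rewrite hpole //=.
    have [q [qA qp q2 qu]] := hmate _ pA ne.
    apply/cards1P; exists q; apply/setP => r; rewrite !inE.
    apply/idP/idP.
    * by case/and3P => rA rp /eqP r2; rewrite (qu _ rA rp r2).
    * by move/eqP ->; rewrite qA qp q2 eqxx.
Qed.


Lemma pair_eq p q : p.1 = q.1 -> p.2 = q.2 -> p = q.
Proof. by move: p q => [a b] [c d] /= -> ->. Qed.

Lemma sp_leP p q : sp_le p q -> [\/ p = q, p.1 :|: p.2 \subset q.1, p.1 :|: p.2 \subset q.2 |
   [/\ p.1 \proper q.1, p.2 = q.2 & p.2 != set0]].
Proof.
rewrite /sp_le; case/or4P => [/eqP|||/and3P [? /eqP ? ?]]; by [constructor 1|constructor 2|constructor 3|constructor 4].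
Qed.

Lemma sp_le_refl p : sp_le p p.
Proof. by rewrite /sp_le eqxx. Qed.

Lemma sp_le_trans p q r : sp_le p q -> sp_le q r -> sp_le p r.
Proof.
move=> /sp_leP [->//|h1|h1|[h1 h2 h3]] /sp_leP [<-|h4|h4|[h4 h5 h6]];
 rewrite /sp_le; apply/or4P.
- by constructor 2.
- by constructor 2; apply: subset_trans h1 (subset_trans (subsetUl _ _) h4).
- by constructor 3; apply: subset_trans h1 (subset_trans (subsetUl _ _) h4).
- by constructor 2; apply: subset_trans h1 (proper_sub h4).
- by constructor 3.
- by constructor 2; apply: subset_trans h1 (subset_trans (subsetUr _ _) h4).
- by constructor 3; apply: subset_trans h1 (subset_trans (subsetUr _ _) h4).
- by constructor 3; rewrite -h5.
- by constructor 4; rewrite h1 h3 h2 !eqxx.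
- by constructor 2; apply: subset_trans h4; rewrite h2; apply: setSU; apply: proper_sub.
- by constructor 3; apply: subset_trans h4; rewrite h2; apply: setSU; apply: proper_sub.
- by constructor 4; rewrite (proper_trans h1 h4) h3 h2 h5 eqxx.
Qed.

Lemma leP1 A B p : sps_le A B -> p \in A -> exists2 q, q \in B & sp_le p q.
Proof. by case/andP => /forall_inP h _ /h /exists_inP. Qed.

Lemma leP2 A B q : sps_le A B -> q \in B -> q.2 != set0 -> (exists2 p, p \in A & p.2 = q.2) ->
  exists2 p, p \in A & p.2 = q.2 /\ sp_le p q.
Proof.
case/andP => _ /forall_inP h qB ne [p0 p0A e].
have := h _ qB; rewrite ne /= => /implyP h'.
have /exists_inP [p pA /andP [/eqP e2 le]] := h' (introT exists_inP (ex_intro2 _ _ p0 p0A (introT eqP e))).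
by exists p.
Qed.

Lemma leI A B : (forall p, p \in A -> exists2 q, q \in B & sp_le p q) ->
  (forall q, q \in B -> q.2 != set0 -> (exists2 p, p \in A & p.2 = q.2) ->
     exists2 p, p \in A & p.2 = q.2 /\ sp_le p q) -> sps_le A B.
Proof.
move=> h1 h2; apply/andP; split.
  by apply/forall_inP => p /h1 [q qB le]; apply/exists_inP; exists q.
apply/forall_inP => q qB; apply/implyP => ne; apply/implyP => /exists_inP [p0 p0A /eqP e].
have [p pA [e2 le]] := h2 _ qB ne (ex_intro2 _ _ p0 p0A e).
by apply/exists_inP; exists p => //; rewrite e2 eqxx.
Qed.

Lemma ne_sub_dis X Y : X != set0 -> [disjoint X & Y] -> X \subset Y -> False.
Proof.
case/set0Pn => x xX dis /subsetP /(_ _ xX) xY.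
by move: (disjointFr dis xX); rewrite xY.
Qed.

Section Basic.
Variable A : sps T.
Hypothesis hA : pstar A.

Lemma uniq1 p q : p \in A -> q \in A -> p.1 = q.1 -> p = q.
Proof.
move=> pA qA e; have [x xp] := set0Pn _ (ps_ne hA pA).
by apply: (ps_uniq hA pA qA xp); rewrite -e.
Qed.

Lemma sub_uniq p q : p \in A -> q \in A -> p.1 \subset q.1 -> p = q.
Proof.
move=> pA qA s; have [x xp] := set0Pn _ (ps_ne hA pA).
by apply: (ps_uniq hA pA qA xp); apply: (subsetP s).
Qed.

Lemma blk_dis p q : p \in A -> q \in A -> p != q -> [disjoint p.1 & q.1].
Proof.
move=> pA qA ne; rewrite -setI_eq0; apply/eqP/setP => x; rewrite !inE.
by apply/negP => /andP [xp xq]; move: ne; rewrite (ps_uniq hA pA qA xp xq) eqxx.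
Qed.

Lemma poleP X : reflect (exists2 q, q \in A & q.2 != set0 /\ q.2 = X) (pole A X).
Proof.
apply: (iffP exists_inP) => [[q qA /andP [ne /eqP e]]|[q qA [ne e]]]; exists q => //.
by rewrite ne e eqxx.
Qed.

Lemma pole_blk X : pole A X -> (X, set0) \in A.
Proof. by case/poleP => q qA [ne <-]; apply: (ps_pole hA). Qed.

Lemma pole_ne X : pole A X -> X != set0.
Proof. by case/poleP => q qA [ne <-]. Qed.

Lemma sat_np p : p \in A -> p.2 != set0 -> ~~ pole A p.1.
Proof.
move=> pA ne; apply/negP => /pole_blk h.
by have := uniq1 pA h erefl => e; move: ne; rewrite e eqxx.
Qed.

Lemma sat_ne12 p : p \in A -> p.2 != set0 -> p.1 != p.2.
Proof.
move=> pA ne; apply/eqP => e; apply: (ne_sub_dis (ps_ne hA pA) (ps_dis hA pA)).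
by rewrite e.
Qed.

End Basic.


Lemma subU2 X Y (Z : {set T}) : X :|: Y \subset Z -> X \subset Z /\ Y \subset Z.
Proof. by rewrite subUset => /andP. Qed.

Lemma sple_same2 p q : p.1 != set0 -> [disjoint p.1 & p.2] -> q.2 = p.2 -> sp_le p q ->
  p.1 \subset q.1.
Proof.
move=> ne dis e /sp_leP [->//|/subU2 [s1 s2]|/subU2 [s1 s2]|[pr _ _]].
- by [].
- by exfalso; rewrite e in s1; exact: ne_sub_dis ne dis s1.
- exact: proper_sub.
Qed.

Section Two.
Variables A B : sps T.
Hypotheses (hA : pstar A) (hB : pstar B) (hle : sps_le A B).

Lemma le_blk p : p \in A -> exists2 q, q \in B & p.1 \subset q.1.
Proof.
move=> pA; have [q qB] := leP1 hle pA.
move/sp_leP => [e|/subU2 [s1 s2]|/subU2 [s1 s2]|[pr _ _]].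
- by subst q; exists p.
- by exists q.
- have ne : q.2 != set0.
    apply: contraNN (ps_ne hA pA) => /eqP e; by rewrite -subset0 -e.
  by exists (q.2, set0) => //; apply: (ps_pole hB).
- by exists q => //; apply: proper_sub.
Qed.

Lemma le_blk2 p : p \in A -> p.2 != set0 -> exists2 q, q \in B & p.2 \subset q.1.
Proof.
move=> pA ne; have [q qB] := leP1 hle pA.
move/sp_leP => [e|/subU2 [s1 s2]|/subU2 [s1 s2]|[pr e _]].
- by subst q; exists (p.2, set0) => //; apply: (ps_pole hB).
- by exists q.
- have ne2 : q.2 != set0.
    apply: contraNN ne => /eqP e; by rewrite -subset0 -e.
  by exists (q.2, set0) => //; apply: (ps_pole hB).
- by exists (q.2, set0) => /=; [apply: (ps_pole hB) => //; rewrite -e | rewrite e].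
Qed.

Lemma K3 p : p \in A -> p.2 != set0 -> (exists2 q0, q0 \in B & q0.2 = p.2) ->
  exists2 q, q \in B & q.2 = p.2 /\ p.1 \subset q.1.
Proof.
move=> pA ne [q0 q0B e0].
have HB : (p.2, set0) \in B by rewrite -e0; apply: (ps_pole hB) => //; rewrite e0.
have [q qB] := leP1 hle pA.
move/sp_leP => [e|/subU2 [s1 s2]|/subU2 [s1 s2]|[pr e _]].
- by subst q; exists p => //; split.
- exfalso; have e4 := sub_uniq hB HB qB s2; rewrite -e4 /= in s1.
  exact: ne_sub_dis (ps_ne hA pA) (ps_dis hA pA) s1.
- have ne2 : q.2 != set0.
    apply: contraNN ne => /eqP e; by rewrite -subset0 -e.
  have HQ : (q.2, set0) \in B by apply: (ps_pole hB).
  exfalso; have e4 := sub_uniq hB HB HQ s2; case: e4 => e4; rewrite -e4 in s1.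
  exact: ne_sub_dis (ps_ne hA pA) (ps_dis hA pA) s1.
- by exists q => //; split => //; apply: proper_sub.
Qed.

Lemma K4 p : p \in A -> p.2 != set0 -> (forall q, q \in B -> q.2 != p.2) ->
  exists2 q, q \in B & p.1 :|: p.2 \subset q.1.
Proof.
move=> pA ne nq; have [q qB] := leP1 hle pA.
move/sp_leP => [e|s|s|[pr e _]].
- by subst q; move: (nq _ qB); rewrite eqxx.
- by exists q.
- have ne2 : q.2 != set0.
    apply: contraNN ne => /eqP e; rewrite -subset0 -e; exact: subset_trans (subsetUr _ _) s.
  by exists (q.2, set0) => //; apply: (ps_pole hB).
- by move: (nq _ qB); rewrite e eqxx.
Qed.

End Two.

Lemma le_trans3 A B C : pstar A -> pstar B -> pstar C -> sps_le A B -> sps_le B C -> sps_le A C.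
Proof.
move=> hA hB hC hAB hBC; apply: leI.
  move=> p pA; have [q qB l1] := leP1 hAB pA; have [r rC l2] := leP1 hBC qB.
  by exists r => //; apply: sp_le_trans l2.
move=> r rC ne [p0 p0A e0].
case: (classic (exists2 q, q \in B & q.2 = r.2)) => [[q1 q1B e1]|nq].
  have [q qB [e2 l2]] := leP2 hBC rC ne (ex_intro2 _ _ q1 q1B e1).
  have ne2 : q.2 != set0 by rewrite e2.
  have [p pA [e3 l3]] := leP2 hAB qB ne2 (ex_intro2 _ _ p0 p0A (etrans e0 (esym e2))).
  by exists p => //; split; [rewrite e3 | apply: sp_le_trans l2].
exfalso.
have HC : (r.2, set0) \in C by apply: (ps_pole hC).
have ne0 : p0.2 != set0 by rewrite e0.
have nq' : forall q, q \in B -> q.2 != p0.2.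
  by move=> q qB; apply/eqP => e; apply: nq; exists q => //; rewrite e.
have [q qB s] := K4 hB hAB p0A ne0 nq'.
have [r' r'C s'] := le_blk hB hC hBC qB.
have s2 : r.2 \subset r'.1.
  by rewrite -e0; exact: subset_trans (subset_trans (subsetUr _ _) s) s'.
have e4 := sub_uniq hC HC r'C s2.
have s3 : p0.1 \subset r.2.
  have -> : r.2 = r'.1 by rewrite -e4.
  exact: subset_trans (subset_trans (subsetUl _ _) s) s'.
rewrite -e0 in s3; exact: ne_sub_dis (ps_ne hA p0A) (ps_dis hA p0A) s3.
Qed.


Lemma NP_sub A : NP A \subset A.
Proof. by apply/subsetP => p; rewrite inE => /andP []. Qed.

Lemma cardA_le A : pstar A -> #|A| <= #|T|.
Proof.
move=> hA.
have inj : {in A &, injective (fun p : setpair T => p.1)}.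
  by move=> p q pA qA; apply: (uniq1 hA).
have e1 : #|Pof A| = #|A| by rewrite /Pof card_in_imset.
have hpart : partition (Pof A) [set: T].
  by move/polestarP: hA => /and4P [_ h _ _].
rewrite -e1 -cardsT (card_partition hpart) -sum1_card.
apply: leq_sum => S /imsetP [p pA ->]; rewrite card_gt0; exact: (ps_ne hA pA).
Qed.

Lemma hfunE A : pstar A -> hfun A = #|T| - #|NP A|.
Proof.
move=> hA.
have inj : {in A &, injective (fun p : setpair T => p.1)}.
  by move=> p q pA qA; apply: (uniq1 hA).
have inj' : {in A :\: NP A &, injective (fun p : setpair T => p.1)}.
  by move=> p q /setDP [pA _] /setDP [qA _]; apply: (uniq1 hA).
have e1 : #|Pof A| = #|A| by rewrite /Pof card_in_imset.
have e2 : Hof A = [set p.1 | p in A :\: NP A].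
  apply/setP => X; apply/imsetP/imsetP.
  - case=> p; rewrite inE => /andP [pA ne] ->.
    exists (p.2, set0) => //; rewrite !inE (ps_pole hA) // andbT negbK /=.
    by apply/poleP; exists p.
  - case=> p /setDP [pA]; rewrite inE pA /= negbK => /poleP [q qA [ne e]] ->.
    by exists q => //; rewrite inE qA.
have e3 : #|Hof A| = #|A :\: NP A| by rewrite e2 card_in_imset.
have e4 := cardsID (NP A) A.
rewrite (setIidPr (NP_sub A)) in e4.
have := cardA_le hA.
rewrite /hfun e1 e3; lia.
Qed.


Lemma NP_ex A B q : pstar A -> pstar B -> sps_le A B -> q \in NP B ->
  exists2 p, p \in NP A & p.1 \subset q.1.
Proof.
move=> hA hB hle; rewrite inE => /andP [qB npq].
have [x xq] := set0Pn _ (ps_ne hB qB).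
have [r rA xr] := ps_cov hA x.
have [q' q'B s'] := le_blk hA hB hle rA.
have e : q' = q by apply: (ps_uniq hB q'B qB (subsetP s' _ xr) xq).
subst q'.
case: (boolP (pole A r.1)) => pr; last by exists r => //; rewrite inE rA pr.
case/poleP: pr => [s sA [ne e]].
case: (classic (exists2 q0, q0 \in B & q0.2 = s.2)) => [[q0 q0B e0]|nq].
  exfalso; have HB : (q0.2, set0) \in B by apply: (ps_pole hB) => //; rewrite e0.
  have e1 : (q0.2, set0) = q by apply: (ps_uniq hB HB qB _ xq); rewrite /= e0 e.
  move/negP: npq; apply; apply/poleP; exists q0 => //; split; first by rewrite e0.
  by rewrite -e1.
have nq' : forall q1, q1 \in B -> q1.2 != s.2.
  by move=> q1 q1B; apply/eqP => e1; apply: nq; exists q1.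
have [q'' q''B s''] := K4 hB hle sA ne nq'.
have xs2 : x \in s.2 by rewrite e.
have e2 : q'' = q by apply: (ps_uniq hB q''B qB _ xq); apply: (subsetP s''); rewrite inE xs2 orbT.
subst q''; exists s; first by rewrite inE sA (sat_np hA sA ne).
exact: subset_trans (subsetUl _ _) s''.
Qed.

Lemma NP_mono A B : pstar A -> pstar B -> sps_le A B -> #|NP B| <= #|NP A|.
Proof.
move=> hA hB hle.
pose g q := odflt q [pick p in NP A | p.1 \subset q.1].
have gP : forall q, q \in NP B -> g q \in NP A /\ (g q).1 \subset q.1.
  move=> q qN; rewrite /g; case: pickP => [p /andP [pN ps]|none] //=.
  by exfalso; have [p pN ps] := NP_ex hA hB hle qN; move: (none p); rewrite pN ps.
have inj : {in NP B &, injective g}.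
  move=> q q' qN q'N e.
  have [gN gs] := gP _ qN; have [_ gs'] := gP _ q'N.
  have [x xg] := set0Pn _ (ps_ne hA (subsetP (NP_sub A) _ gN)).
  move: qN q'N; rewrite !inE => /andP [qB _] /andP [q'B _].
  apply: (ps_uniq hB qB q'B (subsetP gs _ xg)); rewrite -e in gs'; exact: (subsetP gs' _ xg).
rewrite -(card_in_imset inj); apply: subset_leq_card; apply/subsetP => y /imsetP [q qN ->].
by case: (gP _ qN).
Qed.


Lemma disU X Y (Z : {set T}) : [disjoint X & Z] -> [disjoint Y & Z] -> [disjoint X :|: Y & Z].
Proof. by rewrite -!setI_eq0 setIUl => /eqP -> /eqP ->; rewrite setU0. Qed.

Lemma dis0 X : [disjoint X & (set0 : {set T})].
Proof. by rewrite -setI_eq0 setI0. Qed.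

Lemma not_sub_dis X Y : X != set0 -> [disjoint X & Y] -> ~~ (X \subset Y).
Proof. by move=> ne dis; apply/negP => s; exact: ne_sub_dis ne dis s. Qed.

Lemma pole_neq A p X : pole A X -> ~~ pole A p.1 -> (X, set0) != p.
Proof. by move=> pX npp; apply/eqP => e; move: npp; rewrite -e /= pX. Qed.

Section Absorb.
Variable A : sps T.
Hypothesis hA : pstar A.
Variables p1 p2 : setpair T.
Hypotheses (p1A : p1 \in A) (p2A : p2 \in A) (p12 : p1 != p2) (e1 : p1.2 = set0)
  (np1 : ~~ pole A p1.1) (np2 : ~~ pole A p2.1).

Definition nwA := (p1.1 :|: p2.1, p2.2).
Definition CA := nwA |: (A :\: [set p1; p2]).

Lemma CA_cases r : r \in CA -> r = nwA \/ [/\ r \in A, r != p1 & r != p2].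
Proof.
rewrite !inE => /orP [/eqP -> | /andP [] ]; first by left.
by rewrite negb_or => /andP [a b] c; right.
Qed.

Lemma CA_old r : r \in A -> r != p1 -> r != p2 -> r \in CA.
Proof. by move=> rA a b; rewrite !inE negb_or rA a b orbT. Qed.

Lemma CA_nw : nwA \in CA.
Proof. by rewrite !inE eqxx. Qed.

Lemma dis12 : [disjoint p1.1 & p2.1].
Proof. have := blk_dis hA p1A p2A p12. exact. Qed.

Lemma nwA_notin : nwA \notin A.
Proof.
apply/negP => nA.
have [x xp] := set0Pn _ (ps_ne hA p1A).
have xn : x \in nwA.1 by rewrite /= inE xp.
have e := ps_uniq hA nA p1A xn xp.
have e' := f_equal fst e; rewrite /= in e'.
have s : p2.1 \subset p1.1 by rewrite -e' subsetUr.
by apply: (ne_sub_dis (ps_ne hA p2A) _ s); rewrite disjoint_sym dis12.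
Qed.

Lemma nwA_neq r : r \in A -> r != nwA.
Proof. by move=> rA; apply: contraNN nwA_notin => /eqP <-. Qed.

Lemma nwA_np : ~~ pole A nwA.1.
Proof.
apply/negP => /(pole_blk hA) h.
have [x xp] := set0Pn _ (ps_ne hA p1A).
have xn : x \in nwA.1 by rewrite /= inE xp.
have e := ps_uniq hA h p1A xn xp.
have e' := f_equal fst e; rewrite /= in e'.
have s : p2.1 \subset p1.1 by rewrite -e' subsetUr.
by apply: (ne_sub_dis (ps_ne hA p2A) _ s); rewrite disjoint_sym dis12.
Qed.

Lemma CA_pstar : pstar CA.
Proof.
constructor.
- move=> r /CA_cases [->|[rA _ _]]; last exact: (ps_ne hA rA).
  have [x xp] := set0Pn _ (ps_ne hA p1A).
  by apply/set0Pn; exists x; rewrite /= inE xp.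
- move=> r /CA_cases [->|[rA _ _]]; last exact: (ps_dis hA rA).
  rewrite /nwA /=; apply: disU; last exact: (ps_dis hA p2A).
  case: (eqVneq p2.2 set0) => [->|ne]; first exact: dis0.
  have HA := ps_pole hA p2A ne.
  have nP : (p2.2, set0) != p1 by apply: pole_neq np1; apply/poleP; exists p2.
  rewrite disjoint_sym; exact: (blk_dis hA HA p1A nP).
- move=> x; have [r rA xr] := ps_cov hA x.
  case: (eqVneq r p1) => [e|n1]; first by exists nwA; [exact: CA_nw | rewrite /= inE -e xr].
  case: (eqVneq r p2) => [e|n2]; first by exists nwA; [exact: CA_nw | rewrite /= inE -e xr orbT].
  by exists r => //; apply: CA_old.
- move=> r r' x /CA_cases [->|[rA a b]] /CA_cases [->|[r'A a' b']] //=.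
  + rewrite inE => /orP [xp|xp] xr'; exfalso.
      by move: a'; rewrite (ps_uniq hA p1A r'A xp xr') eqxx.
    by move: b'; rewrite (ps_uniq hA p2A r'A xp xr') eqxx.
  + move=> xr; rewrite inE => /orP [xp|xp]; exfalso.
      by move: a; rewrite (ps_uniq hA rA p1A xr xp) eqxx.
    by move: b; rewrite (ps_uniq hA rA p2A xr xp) eqxx.
  + exact: (ps_uniq hA rA r'A).
- move=> r /CA_cases [->|[rA a b]] ne /=.
  + have HA := ps_pole hA p2A ne.
    have pl : pole A p2.2 by apply/poleP; exists p2.
    apply: CA_old => //; [exact: pole_neq np1 | exact: pole_neq np2].
  + have HA := ps_pole hA rA ne.
    have pl : pole A r.2 by apply/poleP; exists r.
    apply: CA_old => //; [exact: pole_neq np1 | exact: pole_neq np2].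
- move=> r rC ne.
  case: (eqVneq r.2 p2.2) => [e2|n2].
  + have ne2 : p2.2 != set0 by rewrite -e2.
    have [m [mA mp2 m2 mu]] := ps_mate hA p2A ne2.
    have mp1 : m != p1 by apply/eqP => e; move: ne2; rewrite -m2 e e1 eqxx.
    have mC : m \in CA by apply: CA_old.
    case/CA_cases: rC => [er|[rA a b]].
    * exists m; split => //; first by rewrite er; apply: nwA_neq.
        by rewrite m2 er.
      move=> r' /CA_cases [->|[r'A a' b']]; first by rewrite er eqxx.
      by move=> _ e'; apply: mu => //; rewrite e' er.
    * have erm : r = m by apply: mu.
      exists nwA; split => //; first exact: CA_nw.
        by rewrite eq_sym; apply: nwA_neq.
      move=> r' /CA_cases [->//|[r'A a' b']] nr e'.
      by exfalso; move: nr; rewrite erm (mu _ r'A b') ?eqxx // e' e2.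
  + case/CA_cases: rC => [er|[rA a b]]; first by move: n2; rewrite er eqxx.
    have [m [mA mr m2 mu]] := ps_mate hA rA ne.
    have mp1 : m != p1 by apply/eqP => e; move: ne; rewrite -m2 e e1 eqxx.
    have mp2 : m != p2 by apply/eqP => e; move: n2; rewrite -m2 e eqxx.
    exists m; split => //; first exact: CA_old.
    move=> r' /CA_cases [->|[r'A a' b']]; first by move=> _ e'; move: n2; rewrite -e' eqxx.
    by move=> nr e'; apply: mu.
Qed.

Lemma p2_le_nw : sp_le p2 nwA.
Proof.
rewrite /sp_le; apply/or4P.
case: (eqVneq p2.2 set0) => [e|ne].
  by constructor 2; rewrite e setU0 /= subsetUr.
constructor 4; rewrite /nwA /= eqxx ?ne !andbT.
apply: properUr; apply: not_sub_dis (ps_ne hA p1A) dis12.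
Qed.

Lemma A_le_CA : sps_le A CA.
Proof.
apply: leI.
- move=> r rA.
  case: (eqVneq r p1) => [->|n1].
    by exists nwA; [exact: CA_nw | rewrite /sp_le e1 setU0 /= subsetUl orbT].
  case: (eqVneq r p2) => [->|n2]; first by exists nwA; [exact: CA_nw | exact: p2_le_nw].
  by exists r; [apply: CA_old | apply: sp_le_refl].
- move=> q /CA_cases [->|[qA a b]] ne _.
    by exists p2 => //; split => //; exact: p2_le_nw.
  by exists q => //; split => //; exact: sp_le_refl.
Qed.

Lemma poleCA X : pole CA X = pole A X.
Proof.
apply/poleP/poleP.
- case=> r /CA_cases [->|[rA _ _]] [ne e]; first by exists p2.
  by exists r.
- case=> r rA [ne e].
  case: (eqVneq r p1) => [er|n1]; first by move: ne; rewrite er e1 eqxx.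
  case: (eqVneq r p2) => [er|n2]; first by exists nwA; [exact: CA_nw | rewrite /= -er].
  by exists r => //; apply: CA_old.
Qed.

Lemma NP_CA : #|NP CA| + 1 = #|NP A|.
Proof.
have eN : NP CA = nwA |: (NP A :\: [set p1; p2]).
  apply/setP => r; rewrite !inE poleCA.
  case: (eqVneq r nwA) => [->|nr] /=; first by rewrite nwA_np.
  by rewrite andbA andbC.
have p1N : p1 \in NP A by rewrite inE p1A np1.
have p2N : p2 \in NP A by rewrite inE p2A np2.
have eI : NP A :&: [set p1; p2] = [set p1; p2].
  by apply/setIidPr; apply/subsetP => r; rewrite !inE => /orP [/eqP -> | /eqP ->]; rewrite ?p1A ?p2A ?np1 ?np2.
have nin : nwA \notin NP A :\: [set p1; p2].
  by rewrite !inE (negbTE nwA_notin) !andbF.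
rewrite eN cardsU1 nin cardsD eI cards2 p12.
have sub : [set p1; p2] \subset NP A.
  by apply/subsetP => r; rewrite !inE => /orP [/eqP -> | /eqP ->]; rewrite ?p1A ?p2A ?np1 ?np2.
have := subset_leq_card sub; rewrite cards2 p12 /=.
move=> h /=. rewrite add1n addn1 -subSn // subSS subn1 prednK //. by apply: leq_trans h.
Qed.

Section AbsorbB.
Variable B : sps T.
Hypotheses (hB : pstar B) (hle : sps_le A B).
Variable q0 : setpair T.
Hypotheses (q0B : q0 \in B) (sq0 : nwA.1 \subset q0.1) (e0 : p2.2 = set0 \/ q0.2 = p2.2).

Lemma nw_le_q0 : sp_le nwA q0.
Proof.
rewrite /sp_le; apply/or4P.
case: (eqVneq p2.2 set0) => [e2|ne2].
  by constructor 2; move: sq0; rewrite /nwA /= e2 setU0.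
case: e0 => [e|e]; first by move: ne2; rewrite e eqxx.
case: (eqVneq nwA.1 q0.1) => [e'|ne'].
  by constructor 1; apply/eqP; apply: pair_eq => //; rewrite e.
constructor 4; rewrite properEneq ne' sq0 /nwA /= e eqxx.
by [].
Qed.

Lemma CA_le_B : sps_le CA B.
Proof.
apply: leI.
- move=> r /CA_cases [->|[rA _ _]]; first by exists q0 => //; exact: nw_le_q0.
  exact: leP1 hle rA.
- move=> q qB ne [r rC er].
  have ex : exists2 r0, r0 \in A & r0.2 = q.2.
    case/CA_cases: rC => [e|[rA _ _]]; last by exists r.
    by exists p2 => //; rewrite -er e.
  have [p pA [ep lp]] := leP2 hle qB ne ex.
  case: (eqVneq p p1) => [e|n1]; first by move: ne; rewrite -ep e e1 eqxx.
  case: (eqVneq p p2) => [e|n2]; last by exists p => //; apply: CA_old.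
  subst p.
  have s := sple_same2 (ps_ne hA p2A) (ps_dis hA p2A) (esym ep) lp.
  have [x xp] := set0Pn _ (ps_ne hA p2A).
  have xq0 : x \in q0.1 by apply: (subsetP sq0); rewrite /= inE xp orbT.
  have eq0 : q = q0 by apply: (ps_uniq hB qB q0B (subsetP s _ xp) xq0).
  subst q; exists nwA; [exact: CA_nw | split => //; exact: nw_le_q0].
Qed.

End AbsorbB.
End Absorb.

Section Collapse.
Variable A : sps T.
Hypothesis hA : pstar A.
Variables p p' : setpair T.
Hypotheses (pA : p \in A) (ne : p.2 != set0) (p'A : p' \in A) (pp' : p' != p)
  (e' : p'.2 = p.2) (mu : forall r, r \in A -> r != p -> r.2 = p.2 -> r = p').

Definition nwC := (p.1 :|: p'.1 :|: p.2, set0 : {set T}).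
Definition hC := (p.2, set0 : {set T}).
Definition CC := nwC |: (A :\: [set p; p'; hC]).

Lemma hCA : hC \in A.
Proof. exact: (ps_pole hA pA ne). Qed.

Lemma samepole r : r \in A -> r.2 = p.2 -> r = p \/ r = p'.
Proof. move=> rA e; case: (eqVneq r p) => [->|n]; [by left | by right; apply: mu]. Qed.

Lemma CC_cases r : r \in CC -> r = nwC \/ [/\ r \in A, r != p, r != p' & r != hC].
Proof.
rewrite !inE => /orP [/eqP -> | /andP [] ]; first by left.
by rewrite !negb_or => /andP [/andP [a b] c] d; right.
Qed.

Lemma CC_old r : r \in A -> r != p -> r != p' -> r != hC -> r \in CC.
Proof. by move=> rA a b c; rewrite !inE !negb_or rA a b c orbT. Qed.

Lemma CC_nw : nwC \in CC.
Proof. by rewrite !inE eqxx. Qed.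

Lemma nwC_notin : nwC \notin A.
Proof.
apply/negP => nA.
have [x xp] := set0Pn _ (ps_ne hA pA).
have xn : x \in nwC.1 by rewrite /= !inE xp.
have e := ps_uniq hA nA pA xn xp.
by move: ne; rewrite -e eqxx.
Qed.

Lemma nwC_neq r : r \in A -> r != nwC.
Proof. by move=> rA; apply: contraNN nwC_notin => /eqP <-. Qed.

Lemma old_pole r : r \in A -> r != p -> r != p' -> r.2 != p.2.
Proof. by move=> rA a b; apply/eqP => e; case: (samepole rA e) => ee; [move: a | move: b]; rewrite ee eqxx. Qed.

Lemma CC_pstar : pstar CC.
Proof.
constructor.
- move=> r /CC_cases [->|[rA _ _ _]]; last exact: (ps_ne hA rA).
  have [x xp] := set0Pn _ (ps_ne hA pA).
  by apply/set0Pn; exists x; rewrite /= !inE xp.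
- move=> r /CC_cases [->|[rA _ _ _]]; last exact: (ps_dis hA rA).
  exact: dis0.
- move=> x; have [r rA xr] := ps_cov hA x.
  case: (eqVneq r p) => [e|n1]; first by exists nwC; [exact: CC_nw | rewrite /= !inE -e xr].
  case: (eqVneq r p') => [e|n2]; first by exists nwC; [exact: CC_nw | rewrite /= !inE -e xr orbT].
  case: (eqVneq r hC) => [e|n3]; first by exists nwC; [exact: CC_nw | rewrite /= !inE -[p.2]/(hC.1) -e xr !orbT].
  by exists r => //; apply: CC_old.
- have key : forall r x, r \in A -> r != p -> r != p' -> r != hC -> x \in nwC.1 -> x \in r.1 -> False.
    move=> r x rA a b c; rewrite /= !inE => /orP [/orP [xp|xp]|xp] xr.
    + by move: a; rewrite (ps_uniq hA rA pA xr xp) eqxx.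
    + by move: b; rewrite (ps_uniq hA rA p'A xr xp) eqxx.
    + by move: c; rewrite (ps_uniq hA rA hCA xr xp) eqxx.
  move=> r r' x /CC_cases [->|[rA a b c]] /CC_cases [->|[r'A a' b' c']] //=.
  + by move=> xn xr'; exfalso; exact: (key r' x).
  + by move=> xr xn; exfalso; exact: (key r x).
  + exact: (ps_uniq hA rA r'A).
- move=> r /CC_cases [->|[rA a b c]] ne2 /=; first by move: ne2; rewrite eqxx.
  have HA := ps_pole hA rA ne2.
  have n3 := old_pole rA a b.
  apply: CC_old => //; apply/eqP => e.
  + by move: e => /(f_equal snd) /= e; move: ne; rewrite -e eqxx.
  + by move: e => /(f_equal snd) /= e; move: ne; rewrite -e' -e eqxx.
  + by move: e => /(f_equal fst) /= e; move: n3; rewrite e eqxx.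
- move=> r /CC_cases [->|[rA a b c]] ne2; first by move: ne2; rewrite eqxx.
  have n3 := old_pole rA a b.
  have [m [mA mr m2 mu2]] := ps_mate hA rA ne2.
  have m1 : m != p by apply/eqP => e; move: n3; rewrite -m2 e eqxx.
  have mp' : m != p' by apply/eqP => e; move: n3; rewrite -m2 e e' eqxx.
  have m3 : m != hC by apply/eqP => e; move: ne2; rewrite -m2 e eqxx.
  exists m; split => //; first exact: CC_old.
  move=> r' /CC_cases [->|[r'A a' b' c']] nr e2; first by move: ne2; rewrite -e2 eqxx.
  exact: mu2.
Qed.

Lemma le_nwC r : r.1 \subset nwC.1 -> r.2 \subset nwC.1 -> sp_le r nwC.
Proof. by move=> sX sY; rewrite /sp_le; apply/or4P; constructor 2; rewrite subUset sX sY. Qed.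

Lemma A_le_CC : sps_le A CC.
Proof.
apply: leI.
- move=> r rA.
  case: (eqVneq r p) => [->|n1].
    exists nwC; first exact: CC_nw.
    by apply: le_nwC; apply/subsetP => x xp; rewrite /= !inE xp ?orbT.
  case: (eqVneq r p') => [->|n2].
    exists nwC; first exact: CC_nw.
    by apply: le_nwC; apply/subsetP => x; rewrite /= ?e' => xp; rewrite !inE xp ?orbT.
  case: (eqVneq r hC) => [->|n3].
    exists nwC; first exact: CC_nw.
    by apply: le_nwC; apply/subsetP => x; rewrite /= ?inE => xp; rewrite ?xp ?orbT.
  by exists r; [apply: CC_old | apply: sp_le_refl].
- move=> q /CC_cases [->|[qA a b c]] ne2 _; first by move: ne2; rewrite eqxx.
  by exists q => //; split => //; exact: sp_le_refl.
Qed.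

Lemma poleCC X : pole CC X = pole A X && (X != p.2).
Proof.
apply/poleP/andP.
- case=> r /CC_cases [->|[rA a b c]] [ne2 e2]; first by move: ne2; rewrite eqxx.
  split; first by apply/poleP; exists r.
  by rewrite -e2; apply: old_pole.
- case=> /poleP [r rA [ne2 e2]] nX.
  have a : r != p by apply/eqP => e; move: nX; rewrite -e2 e eqxx.
  have b : r != p' by apply/eqP => e; move: nX; rewrite -e2 e e' eqxx.
  have c : r != hC by apply/eqP => e; move: ne2; rewrite e eqxx.
  by exists r => //; apply: CC_old.
Qed.

Lemma NP_CC : #|NP CC| + 1 = #|NP A|.
Proof.
have hp : pole A p.2 by apply/poleP; exists p.
have eN : NP CC = nwC |: (NP A :\: [set p; p']).
  apply/setP => r; rewrite [in LHS]inE poleCC.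
  case: (eqVneq r nwC) => [->|nr].
    rewrite CC_nw !inE eqxx /=; apply/negP => /andP [/(pole_blk hA) h _].
    have [x xp] := set0Pn _ (ps_ne hA pA).
    have xn : x \in nwC.1 by rewrite /= !inE xp.
    have e := ps_uniq hA h pA xn xp.
    by move: ne; rewrite -e eqxx.
  rewrite !inE (negbTE nr) /=.
  case: (eqVneq r hC) => [->|n3] /=; first by rewrite hp !orbT /= !andbF.
  case: (boolP (r \in A)) => rA /=; last by rewrite !andbF.
  case: (eqVneq r p) => [->|n1] //=.
  have r1 : r.1 != p.2.
    by apply/eqP => e; move: n3; rewrite (uniq1 hA rA hCA e) eqxx.
  by rewrite r1 !andbT orbF.
have p1N : p \in NP A by rewrite inE pA (sat_np hA pA ne).
have p2N : p' \in NP A by rewrite inE p'A (sat_np hA p'A) // e'.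
have sub : [set p; p'] \subset NP A.
  by apply/subsetP => r; rewrite !inE => /orP [/eqP -> | /eqP ->]; [move: p1N | move: p2N]; rewrite inE.
have eI : NP A :&: [set p; p'] = [set p; p'] by apply/setIidPr.
have nin : nwC \notin NP A :\: [set p; p'].
  by rewrite !inE (negbTE nwC_notin) !andbF.
rewrite eN cardsU1 nin cardsD eI cards2 eq_sym pp'.
have := subset_leq_card sub; rewrite cards2 eq_sym pp' /=.
move=> h. rewrite add1n addn1 -subSn // subSS subn1 prednK //. by apply: leq_trans h.
Qed.

Section CollapseB.
Variable B : sps T.
Hypotheses (hB : pstar B) (hle : sps_le A B) (nq : forall q, q \in B -> q.2 != p.2).

Lemma CC_le_B : sps_le CC B.
Proof.
apply: leI.
- move=> r /CC_cases [->|[rA _ _ _]]; last exact: leP1 hle rA.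
  have [q1 q1B s1] := K4 hB hle pA ne nq.
  have nq' : forall q, q \in B -> q.2 != p'.2 by move=> q qB; rewrite e'; apply: nq.
  have ne' : p'.2 != set0 by rewrite e'.
  have [q2 q2B s2] := K4 hB hle p'A ne' nq'.
  have [x xp] := set0Pn _ ne.
  have x1 : x \in q1.1 by apply: (subsetP s1); rewrite inE xp orbT.
  have x2 : x \in q2.1 by apply: (subsetP s2); rewrite inE e' xp orbT.
  have e12 := ps_uniq hB q2B q1B x2 x1; subst q2.
  exists q1 => //; rewrite /sp_le; apply/or4P; constructor 2.
  rewrite /= setU0 !subUset; move: s1 s2; rewrite !subUset => /andP [-> ->] /andP [-> _] //.
- move=> q qB ne2 [r rC er].
  case/CC_cases: rC => [e|[rA _ _ _]]; first by move: ne2; rewrite -er e eqxx.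
  have [p0 p0A [ep lp]] := leP2 hle qB ne2 (ex_intro2 _ _ r rA er).
  exists p0 => //; apply: CC_old => //; apply/eqP => e.
  + by move: (nq qB); rewrite -ep e eqxx.
  + by move: (nq qB); rewrite -ep e e' eqxx.
  + by move: ne2; rewrite -ep e eqxx.
Qed.

End CollapseB.
End Collapse.

Lemma card3 (a b c : setpair T) : a != b -> a != c -> b != c -> #|[set a; b; c]| = 3.
Proof.
move=> ab ac bc.
have -> : [set a; b; c] = a |: [set b; c] by apply/setP => x; rewrite !inE orbA.
by rewrite cardsU1 cards2 bc !inE negb_or ab ac.
Qed.

Section Star.
Variables A B : sps T.
Hypotheses (hA : pstar A) (hB : pstar B) (hle : sps_le A B).
Variables q1 q2 : setpair T.
Hypotheses (q1B : q1 \in B) (q2B : q2 \in B) (ne1 : q1.2 != set0) (q21 : q2 != q1)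
  (e21 : q2.2 = q1.2) (mu : forall r, r \in B -> r != q1 -> r.2 = q1.2 -> r = q2).
Hypotheses (f1A : (q1.1, set0) \in A) (f2A : (q2.1, set0) \in A) (hbA : (q1.2, set0) \in A)
  (np1 : ~~ pole A q1.1) (np2 : ~~ pole A q2.1) (nHB : ~~ pole A q1.2).

Definition f1 := (q1.1, set0 : {set T}).
Definition f2 := (q2.1, set0 : {set T}).
Definition hb := (q1.2, set0 : {set T}).
Definition CS := q1 |: (q2 |: (A :\: [set f1; f2])).

Lemma CS_cases r : r \in CS -> [\/ r = q1, r = q2 | [/\ r \in A, r != f1 & r != f2]].
Proof.
rewrite !inE => /orP [/eqP -> | /orP [/eqP -> | /andP []]]; [by constructor 1 | by constructor 2 |].
by rewrite negb_or => /andP [a b] c; constructor 3.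
Qed.

Lemma CS_old r : r \in A -> r != f1 -> r != f2 -> r \in CS.
Proof. by move=> rA a b; rewrite !inE negb_or rA a b !orbT. Qed.

Lemma CS_q1 : q1 \in CS.
Proof. by rewrite !inE eqxx. Qed.
Lemma CS_q2 : q2 \in CS.
Proof. by rewrite !inE eqxx orbT. Qed.

Lemma ne2 : q2.2 != set0.
Proof. by rewrite e21. Qed.

Lemma q1_notin : q1 \notin A.
Proof.
apply/negP => h; have e := uniq1 hA h f1A erefl.
by move: ne1; rewrite e eqxx.
Qed.

Lemma q2_notin : q2 \notin A.
Proof.
apply/negP => h; have e := uniq1 hA h f2A erefl.
by move: ne2; rewrite e eqxx.
Qed.

Lemma pole_old r : r \in A -> r.2 != set0 -> r.2 != q1.2.
Proof.
by move=> rA ne; apply/eqP => e; move: nHB; rewrite -e; apply/negP/negPn/poleP; exists r.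
Qed.

Lemma CS_pstar : pstar CS.
Proof.
constructor.
- by move=> r /CS_cases [->|->|[rA _ _]]; [exact: (ps_ne hB q1B) | exact: (ps_ne hB q2B) | exact: (ps_ne hA rA)].
- by move=> r /CS_cases [->|->|[rA _ _]]; [exact: (ps_dis hB q1B) | exact: (ps_dis hB q2B) | exact: (ps_dis hA rA)].
- move=> x; have [r rA xr] := ps_cov hA x.
  case: (eqVneq r f1) => [e|n1]; first by exists q1; [exact: CS_q1 | move: xr; rewrite e].
  case: (eqVneq r f2) => [e|n2]; first by exists q2; [exact: CS_q2 | move: xr; rewrite e].
  by exists r => //; apply: CS_old.
- have key : forall r x q, q \in B -> (q.1, set0) \in A -> r \in A -> r != (q.1, set0) ->
      x \in q.1 -> x \in r.1 -> False.
    move=> r x q qB fA rA nr xq xr.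
    by move: nr; rewrite (ps_uniq hA rA fA xr xq) eqxx.
  move=> r r' x /CS_cases [->|->|[rA a b]] /CS_cases [->|->|[r'A a' b']];
    try (by apply: (ps_uniq hB)); try (by move=> ? ?; exfalso; apply: (key r' x q1)); try (by move=> ? ?; exfalso; apply: (key r' x q2));
    try (by move=> ? ?; exfalso; apply: (key r x q1)); try (by move=> ? ?; exfalso; apply: (key r x q2)).
  exact: (ps_uniq hA).
- have hb1 : hb != f1.
    by apply/eqP => /(f_equal fst) /= e; move: (sat_ne12 hB q1B ne1); rewrite e eqxx.
  have hb2 : hb != f2.
    by apply/eqP => /(f_equal fst) /= e; move: (sat_ne12 hB q2B ne2); rewrite e21 e eqxx.
  move=> r /CS_cases [->|->|[rA a b]] ne /=.
  + exact: CS_old.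
  + by rewrite e21; exact: CS_old.
  + have HA := ps_pole hA rA ne.
    have pl : pole A r.2 by apply/poleP; exists r.
    by apply: CS_old => //; [exact: (pole_neq (p:=f1) pl np1) | exact: (pole_neq (p:=f2) pl np2)].
- move=> r /CS_cases [->|->|[rA a b]] ne.
  + exists q2; split => //; first exact: CS_q2.
    move=> r' /CS_cases [->|->|[r'A a' b']] nr e'; [by move: nr; rewrite eqxx | by [] |].
    by exfalso; move: (pole_old r'A); rewrite e' ne1 eqxx => /(_ isT).
  + exists q1; split => //; [exact: CS_q1 | by rewrite eq_sym | ].
    move=> r' /CS_cases [->|->|[r'A a' b']] nr e'; [by [] | by move: nr; rewrite eqxx |].
    by exfalso; move: (pole_old r'A); rewrite e' e21 ne1 eqxx => /(_ isT).
  + have [m [mA mr m2 mu2]] := ps_mate hA rA ne.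
    have mf1 : m != f1 by apply/eqP => e; move: ne; rewrite -m2 e eqxx.
    have mf2 : m != f2 by apply/eqP => e; move: ne; rewrite -m2 e eqxx.
    exists m; split => //; first exact: CS_old.
    have n1 := pole_old rA ne.
    move=> r' /CS_cases [->|->|[r'A a' b']] nr e'; first by move: n1; rewrite -e' eqxx.
      by move: n1; rewrite -e' e21 eqxx.
    exact: mu2.
Qed.

Lemma A_le_CS : sps_le A CS.
Proof.
apply: leI.
- move=> r rA.
  have sp : forall q, sp_le (q.1, set0) q.
    by move=> q; rewrite /sp_le; apply/or4P; constructor 2; rewrite /= setU0.
  case: (eqVneq r f1) => [->|n1]; first by exists q1; [exact: CS_q1 | exact: sp].
  case: (eqVneq r f2) => [->|n2]; first by exists q2; [exact: CS_q2 | exact: sp].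
  by exists r; [apply: CS_old | apply: sp_le_refl].
- move=> q /CS_cases [->|->|[qA a b]] ne [p pA ep].
  + by exfalso; move: (nHB); rewrite -ep; apply/negP/negPn/poleP; exists p => //; rewrite ep.
  + by exfalso; move: (nHB); rewrite -e21 -ep; apply/negP/negPn/poleP; exists p => //; rewrite ep.
  + by exists q => //; split => //; exact: sp_le_refl.
Qed.

Lemma CS_le_B : sps_le CS B.
Proof.
apply: leI.
- move=> r /CS_cases [->|->|[rA _ _]]; [by exists q1 => //; apply: sp_le_refl | by exists q2 => //; apply: sp_le_refl |].
  exact: leP1 hle rA.
- move=> q qB ne [r rC er].
  case: (eqVneq q.2 q1.2) => [e|n].
    case: (eqVneq q q1) => [->|nq1]; first by exists q1; [exact: CS_q1 | split => //; exact: sp_le_refl].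
    have -> := mu qB nq1 e.
    by exists q2; [exact: CS_q2 | split => //; exact: sp_le_refl].
  case/CS_cases: rC => [er1|er2|[rA _ _]].
  + by move: n; rewrite -er er1 eqxx.
  + by move: n; rewrite -er er2 e21 eqxx.
  have [p0 p0A [ep lp]] := leP2 hle qB ne (ex_intro2 _ _ r rA er).
  exists p0 => //; apply: CS_old => //; apply/eqP => e; move: ne; rewrite -ep e eqxx //.
Qed.

Lemma poleCS X : pole CS X = pole A X || (X == q1.2).
Proof.
apply/poleP/orP.
- case=> r /CS_cases [->|->|[rA a b]] [ne e]; [by right; rewrite e | by right; rewrite -e e21 |].
  by left; apply/poleP; exists r.
- case=> [/poleP [r rA [ne e]]|/eqP ->]; last by exists q1; [exact: CS_q1 | split].
  have n1 : r != f1 by apply/eqP => e'; move: ne; rewrite e' eqxx.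
  have n2 : r != f2 by apply/eqP => e'; move: ne; rewrite e' eqxx.
  by exists r => //; apply: CS_old.
Qed.

Lemma NP_CS : #|NP CS| + 1 = #|NP A|.
Proof.
have q12 : q1.1 != q1.2 := sat_ne12 hB q1B ne1.
have q22 : q2.1 != q1.2 by rewrite -e21; exact: (sat_ne12 hB q2B ne2).
have eN : NP CS = q1 |: (q2 |: (NP A :\: [set f1; f2; hb])).
  apply/setP => r; rewrite [in LHS]inE poleCS.
  case: (eqVneq r q1) => [->|nr1].
    by rewrite CS_q1 (negbTE np1) (negbTE q12) !inE eqxx.
  case: (eqVneq r q2) => [->|nr2].
    by rewrite CS_q2 (negbTE np2) (negbTE q22) !inE eqxx orbT.
  rewrite !inE (negbTE nr1) (negbTE nr2) /= !negb_or.
  case: (boolP (r \in A)) => rA /=; last by rewrite !andbF.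
  case: (eqVneq r f1) => [->|n1] //=.
  case: (eqVneq r f2) => [->|n2] //=.
  have -> : (r.1 == q1.2) = (r == hb).
    apply/eqP/eqP => [e|->//]; exact: (uniq1 hA rA hbA e).
  by rewrite andbC.
have f1N : f1 \in NP A by rewrite inE f1A np1.
have f2N : f2 \in NP A by rewrite inE f2A np2.
have hbN : hb \in NP A by rewrite inE hbA nHB.
have f12 : f1 != f2.
  apply/eqP => /(f_equal fst) /= e; move: q21; rewrite (uniq1 hB q2B q1B) ?eqxx //.
have f1h : f1 != hb by apply/eqP => /(f_equal fst) /= e; move: q12; rewrite e eqxx.
have f2h : f2 != hb by apply/eqP => /(f_equal fst) /= e; move: q22; rewrite e eqxx.
have sub : [set f1; f2; hb] \subset NP A.
  by apply/subsetP => r; rewrite !inE => /orP [/orP [/eqP -> | /eqP ->] | /eqP ->]; [move: f1N | move: f2N | move: hbN]; rewrite inE.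
have eI : NP A :&: [set f1; f2; hb] = [set f1; f2; hb] by apply/setIidPr.
have nin2 : q2 \notin NP A :\: [set f1; f2; hb].
  by rewrite !inE (negbTE q2_notin) !andbF.
have nin1 : q1 \notin q2 |: (NP A :\: [set f1; f2; hb]).
  by rewrite !inE eq_sym (negbTE q21) (negbTE q1_notin) !andbF.
rewrite eN cardsU1 nin1 cardsU1 nin2 cardsD eI card3 //.
have := subset_leq_card sub; rewrite card3 //= => h.
by rewrite !add1n addn1 -addn3 subnK.
Qed.

End Star.


Section Final.
Variables A B : sps T.
Hypotheses (hA : pstar A) (hB : pstar B) (hle : sps_le A B).
Hypothesis HI : forall p, p \in A -> p.2 != set0 -> exists2 q, q \in B & q.2 = p.2.
Hypothesis nAB : forall p1 p2 q0, p1 \in A -> p2 \in A -> p1 != p2 -> p1.2 = set0 ->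
  ~~ pole A p1.1 -> ~~ pole A p2.1 -> q0 \in B -> p1.1 :|: p2.1 \subset q0.1 ->
  (p2.2 = set0 \/ q0.2 = p2.2) -> False.

Lemma poleAB X : pole A X -> (X, set0) \in B.
Proof.
case/poleP => r rA [ne e]; have [q qB eq] := HI rA ne.
by rewrite -e -eq; apply: (ps_pole hB qB); rewrite eq.
Qed.

Lemma blkB s q y : s \in A -> q \in B -> y \in s.1 -> y \in q.1 -> s.1 \subset q.1.
Proof.
move=> sA qB ys yq; have [q' q'B s'] := le_blk hA hB hle sA.
by rewrite -(ps_uniq hB q'B qB (subsetP s' _ ys) yq).
Qed.

Lemma E1 p : p \in A -> p.2 != set0 -> p \in B.
Proof.
move=> pA ne.
have [q qB [eq sq]] := K3 hA hB hle pA ne (HI pA ne).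
suff sq' : q.1 \subset p.1.
  have -> : p = q by apply: pair_eq => //; apply/eqP; rewrite eqEsubset sq sq'.
  exact: qB.
apply/subsetP => y yq; have [s sA ys] := ps_cov hA y.
have ss := blkB sA qB ys yq.
case: (eqVneq s p) => [<-//|nsp].
case: (eqVneq s.2 set0) => [e0|ns].
- case: (boolP (pole A s.1)) => [ps|nps].
    have h := poleAB ps.
    have e := ps_uniq hB h qB ys yq.
    by move: ne; rewrite -eq -e eqxx.
  exfalso; apply: (@nAB s p q sA pA nsp e0 nps (sat_np hA pA ne) qB); last by right.
  by rewrite subUset ss sq.
- exfalso.
  have [q'' q''B [e2 s2]] := K3 hA hB hle sA ns (HI sA ns).
  have eq'' := ps_uniq hB q''B qB (subsetP s2 _ ys) yq; subst q''.
  have neq : q.2 != set0 by rewrite eq.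
  have [qq [qqB qqn qq2 _]] := ps_mate hB qB neq.
  have neqq : qq.2 != set0 by rewrite qq2.
  have [p0 p0A [ep0 lp0]] := leP2 hle qqB neqq (ex_intro2 _ _ p pA (etrans (esym eq) (esym qq2))).
  have s0 := sple_same2 (ps_ne hA p0A) (ps_dis hA p0A) (esym ep0) lp0.
  have [m [mA mp m2 mu]] := ps_mate hA pA ne.
  have sm : s = m by apply: mu => //; rewrite -e2 eq.
  have sp0 : p0.1 \subset q.1.
    case: (eqVneq p0 p) => [->//|n0].
    by rewrite (mu _ p0A n0) ?ep0 ?qq2 // -sm.
  have [x xp0] := set0Pn _ (ps_ne hA p0A).
  have := ps_uniq hB qqB qB (subsetP s0 _ xp0) (subsetP sp0 _ xp0).
  by move/eqP; rewrite (negbTE qqn).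
Qed.

Lemma E2 q : q \in B -> exists2 r, r \in A & r.1 = q.1 /\ (r.2 != set0 -> r = q).
Proof.
move=> qB; have [x xq] := set0Pn _ (ps_ne hB qB).
have [r rA xr] := ps_cov hA x.
case: (eqVneq r.2 set0) => [e0|ne]; last first.
  have rB := E1 rA ne; have e := ps_uniq hB rB qB xr xq; subst r.
  by exists q.
exists r => //; split; last by rewrite e0 eqxx.
have sr := blkB rA qB xr xq.
apply/eqP; rewrite eqEsubset sr /=; apply/subsetP => y yq.
have [s sA ys] := ps_cov hA y.
have ss := blkB sA qB ys yq.
case: (eqVneq s r) => [<-//|nsr].
case: (boolP (pole A r.1)) => [pr|npr].
  have h := poleAB pr; have e := ps_uniq hB h qB xr xq.
  by rewrite -e in yq.
exfalso.
case: (eqVneq s.2 set0) => [e1|ns].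
- case: (boolP (pole A s.1)) => [ps|nps].
    have h := poleAB ps; have e := ps_uniq hB h qB ys yq.
    have xs : x \in s.1 by move: sr; rewrite -e /= => /subsetP; apply.
    by move: nsr; rewrite (ps_uniq hA sA rA xs xr) eqxx.
  have nrs : r != s by rewrite eq_sym.
  apply: (@nAB r s q rA sA nrs e0 npr nps qB); first by rewrite subUset sr ss.
  by left.
- have sB := E1 sA ns; have e := ps_uniq hB sB qB ys yq; subst s.
  have nrs : r != q by rewrite eq_sym.
  apply: (@nAB r q q rA sA nrs e0 npr (sat_np hA sA ns) qB); first by rewrite subUset sr ss.
  by right.
Qed.

End Final.

Lemma cover A B : pstar A -> pstar B -> sps_le A B -> A != B ->
  exists C, [/\ pstar C, sps_le A C, sps_le C B & #|NP C| + 1 = #|NP A|].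
Proof.
move=> hA hB hle nAB0.
case: (classic (exists2 p, p \in A & p.2 != set0 /\ forall q, q \in B -> q.2 != p.2)) =>
  [[p pA [ne nq]]|nI].
  have [p' [p'A p'p e' mu]] := ps_mate hA pA ne.
  exists (CC A p p'); split.
  - exact: (CC_pstar hA pA ne p'A e' mu).
  - exact: (A_le_CC A e').
  - exact: (CC_le_B pA ne p'A e' hB hle nq).
  - exact: (NP_CC hA pA ne p'A p'p e' mu).
have HI : forall p, p \in A -> p.2 != set0 -> exists2 q, q \in B & q.2 = p.2.
  move=> p pA ne; apply: NNPP => h; apply: nI; exists p => //; split => // q qB.
  by apply/eqP => e; apply: h; exists q.
case: (classic (exists p1 p2 q0, [/\ p1 \in A, p2 \in A, p1 != p2 & p1.2 = set0] /\
    [/\ ~~ pole A p1.1, ~~ pole A p2.1, q0 \in B, p1.1 :|: p2.1 \subset q0.1 & (p2.2 = set0 \/ q0.2 = p2.2)])) =>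
  [[p1 [p2 [q0 [[p1A p2A p12 e1] [np1 np2 q0B sq0 e0]]]]]|nAB].
  exists (CA A p1 p2); split.
  - exact: (CA_pstar hA p1A p2A p12 e1 np1 np2).
  - exact: (A_le_CA hA p1A p2A p12 e1).
  - exact: (CA_le_B hA p2A e1 hB hle q0B sq0 e0).
  - exact: (NP_CA hA p1A p2A p12 e1 np1 np2).
have nAB' : forall p1 p2 q0, p1 \in A -> p2 \in A -> p1 != p2 -> p1.2 = set0 ->
  ~~ pole A p1.1 -> ~~ pole A p2.1 -> q0 \in B -> p1.1 :|: p2.1 \subset q0.1 ->
  (p2.2 = set0 \/ q0.2 = p2.2) -> False.
  move=> p1 p2 q0 a b c d e f g h i; apply: nAB; exists p1, p2, q0; split => //.
have E1' := E1 hA hB hle HI nAB'.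
have E2' := E2 hA hB hle HI nAB'.
case: (classic (exists2 q1, q1 \in B & q1.2 != set0 /\ ~~ pole A q1.2)) =>
  [[q1 q1B [ne1 np]]|nS].
  have [q2 [q2B q21 e21 mu]] := ps_mate hB q1B ne1.
  have ne2 : q2.2 != set0 by rewrite e21.
  have blkA : forall q, q \in B -> q.2 = q1.2 -> (q.1, set0) \in A.
    move=> q qB eq; have [r rA [er hr]] := E2' _ qB.
    case: (eqVneq r.2 set0) => [e0|nr].
      by have <- : r = (q.1, set0) by apply: pair_eq.
    have := hr nr => erq; move: np; rewrite -eq -erq => /negP; case.
    by apply/poleP; exists r.
  have f1A := blkA _ q1B erefl.
  have f2A := blkA _ q2B e21.
  have hbB : (q1.2, set0) \in B by apply: (ps_pole hB q1B).
  have hbA : (q1.2, set0) \in A.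
    have [r rA [er hr]] := E2' _ hbB.
    case: (eqVneq r.2 set0) => [e0|nr]; first by have <- : r = (q1.2, set0) by apply: pair_eq.
    have e := hr nr; move: nr; rewrite e eqxx //=.
  have npA : forall q, q \in B -> q.2 != set0 -> ~~ pole A q.1.
    move=> q qB nq; apply/negP => /(poleAB hB HI) h.
    by move: nq; rewrite -(uniq1 hB h qB erefl) eqxx.
  have np1 := npA _ q1B ne1.
  have np2 := npA _ q2B ne2.
  exists (CS A q1 q2); split.
  - exact: (CS_pstar hA hB q1B q2B ne1 q21 e21 f1A f2A hbA np1 np2 np).
  - exact: (A_le_CS e21 np).
  - exact: (CS_le_B hle q1B q2B e21 mu).
  - exact: (NP_CS hA hB q1B q2B ne1 q21 e21 f1A f2A hbA np1 np2 np).
exfalso; move/eqP: nAB0; apply.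
have BA : B \subset A.
  apply/subsetP => q qB; have [r rA [er hr]] := E2' _ qB.
  case: (eqVneq r.2 set0) => [e0|nr]; last by rewrite -(hr nr).
  case: (eqVneq q.2 set0) => [eq0|nq0].
    by have <- : r = q by apply: pair_eq => //; rewrite e0 eq0.
  have pq : pole A q.2.
    apply: NNPP => h; apply: nS; exists q => //; split => //; exact/negP.
  case/poleP: pq => s sA [ns es].
  have sB := E1' _ sA ns.
  case: (eqVneq q s) => [->//|nqs].
  have [m [mA ms m2 _]] := ps_mate hA sA ns.
  have nm : m.2 != set0 by rewrite m2.
  have mB := E1' _ mA nm.
  have [qq [qqB _ _ muq]] := ps_mate hB sB ns.
  have e1 := muq _ qB nqs (esym es).
  have e2 := muq _ mB ms m2.
  by rewrite e1 -e2.
apply/eqP; rewrite eqEsubset BA andbT.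
apply/subsetP => p pA; have [x xp] := set0Pn _ (ps_ne hA pA).
have [q qB xq] := ps_cov hB x.
have qA := subsetP BA _ qB.
by rewrite (ps_uniq hA pA qA xp xq).
Qed.

Lemma NP_leT A : pstar A -> #|NP A| <= #|T|.
Proof. move=> hA; apply: leq_trans (cardA_le hA); exact: subset_leq_card (NP_sub A). Qed.

Lemma mono A B : pstar A -> pstar B -> sps_le A B -> hfun A <= hfun B.
Proof.
move=> hA hB hle; rewrite (hfunE hA) (hfunE hB).
have := NP_mono hA hB hle; have := NP_leT hA; have := NP_leT hB; lia.
Qed.

Lemma cover_h A B : pstar A -> pstar B -> sps_le A B -> A != B ->
  exists C, [/\ pstar C, sps_le A C, sps_le C B & hfun C = (hfun A).+1].
Proof.
move=> hA hB hle ne; have [C [hC l1 l2 e]] := cover hA hB hle ne.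
exists C; split => //; rewrite (hfunE hA) (hfunE hC).
have := NP_leT hA; have := NP_leT hC; lia.
Qed.

Lemma smono A B : pstar A -> pstar B -> sps_le A B -> A != B -> hfun A < hfun B.
Proof.
move=> hA hB hle ne; have [C [hC l1 l2 e]] := cover_h hA hB hle ne.
by rewrite -e; apply: mono.
Qed.

Lemma le_refl A : sps_le A A.
Proof.
apply: leI => [p pA|q qA _ _]; first by exists p => //; apply: sp_le_refl.
by exists q => //; split => //; apply: sp_le_refl.
Qed.

Lemma antisym A B : pstar A -> pstar B -> sps_le A B -> sps_le B A -> A = B.
Proof.
move=> hA hB l1 l2; apply/eqP; apply: contraT => ne.
have := smono hA hB l1 ne; have := mono hB hA l2; lia.
Qed.

Lemma min_pstar : pstar (min_sys T).
Proof.
constructor.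
- by move=> p /imsetP [x _ ->] /=; apply/set0Pn; exists x; rewrite set11.
- by move=> p /imsetP [x _ ->] /=; exact: dis0.
- by move=> x; exists ([set x], set0); [apply: imset_f | rewrite set11].
- move=> p q x /imsetP [a _ ->] /imsetP [b _ ->] /=; rewrite !inE => /eqP -> /eqP ->.
  by [].
- by move=> p /imsetP [x _ ->] /=; rewrite eqxx.
- by move=> p /imsetP [x _ ->] /=; rewrite eqxx.
Qed.

Lemma max_pstar : 0 < #|T| -> pstar (max_sys T).
Proof.
move=> hX; constructor.
- move=> p; rewrite inE => /eqP -> /=; apply/set0Pn.
  by case/card_gt0P: hX => x _; exists x; rewrite inE.
- by move=> p; rewrite inE => /eqP -> /=; exact: dis0.
- by move=> x; exists ([set: T], set0); rewrite ?inE.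
- by move=> p q x; rewrite !inE => /eqP -> /eqP ->.
- by move=> p; rewrite inE => /eqP -> /=; rewrite eqxx.
- by move=> p; rewrite inE => /eqP -> /=; rewrite eqxx.
Qed.

Lemma min_le A : pstar A -> sps_le (min_sys T) A.
Proof.
move=> hA; apply: leI.
- move=> p /imsetP [x _ ->]; have [q qA xq] := ps_cov hA x.
  exists q => //; rewrite /sp_le; apply/or4P; constructor 2.
  by rewrite /= setU0 sub1set.
- by move=> q qA ne [p /imsetP [x _ ->] /= e]; move: ne; rewrite -e eqxx.
Qed.

Lemma le_max A : sps_le A (max_sys T).
Proof.
apply: leI.
- move=> p pA; exists ([set: T], set0); first by rewrite inE.
  by rewrite /sp_le; apply/or4P; constructor 2; apply: subsetT.
- by move=> q; rewrite inE => /eqP -> /=; rewrite eqxx.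
Qed.

Lemma h_min : hfun (min_sys T) = 0.
Proof.
rewrite (hfunE min_pstar).
have -> : NP (min_sys T) = min_sys T.
  apply/setP => p; rewrite inE; case: (boolP (p \in min_sys T)) => //= pm.
  apply/negP => /poleP [q /imsetP [x _ ->] [ne _]]; by move: ne; rewrite eqxx.
rewrite card_imset ?cardT ?subnn //.
by move=> x y [] /setP /(_ x); rewrite !inE eqxx => /esym /eqP.
Qed.

Lemma h_max : 0 < #|T| -> hfun (max_sys T) = #|T| - 1.
Proof.
move=> hX; rewrite (hfunE (max_pstar hX)).
have -> : NP (max_sys T) = max_sys T.
  apply/setP => p; rewrite inE; case: (boolP (p \in max_sys T)) => //= pm.
  apply/negP => /poleP [q]; rewrite inE => /eqP -> [ne _]; by move: ne; rewrite eqxx.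
by rewrite cards1.
Qed.

Lemma chainP (C : {set sps T}) (a : sps T) : is_chain C -> a \in C -> pstar a.
Proof. by case=> _ [h _] /h /polestarP. Qed.

Lemma chain_le (C : {set sps T}) (a b : sps T) : is_chain C -> a \in C -> b \in C -> hfun a <= hfun b -> sps_le a b.
Proof.
move=> hC aC bC hab; have ha := chainP hC aC; have hb := chainP hC bC.
case: hC => _ [_ cmp]; case: (cmp _ _ aC bC) => // lba.
case: (eqVneq b a) => [->|nba]; first exact: le_refl.
by have := smono hb ha lba nba; lia.
Qed.

Lemma chain_bound (C : {set sps T}) A : pstar A -> is_chain C -> (forall b, b \in C -> sps_le b A) ->
  #|C| <= (hfun A).+1.
Proof.
move=> hA hC hle.
pose f (a : sps T) : 'I_(hfun A).+1 := inord (hfun a).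
have hb : forall a, a \in C -> hfun a < (hfun A).+1.
  by move=> a aC; rewrite ltnS; apply: mono (chainP hC aC) hA (hle _ aC).
have inj : {in C &, injective f}.
  move=> a b aC bC /(f_equal (@nat_of_ord _)); rewrite /f !inordK ?hb // => e.
  apply: antisym (chainP hC aC) (chainP hC bC) _ _; apply: chain_le hC _ _ _ => //; by rewrite e.
rewrite -(card_in_imset inj); apply: leq_trans (max_card _) _; by rewrite card_ord.
Qed.

Lemma build A : pstar A -> forall j, j <= hfun A -> exists D m,
  [/\ is_chain D, m \in D, (forall b, b \in D -> sps_le b m), sps_le m A /\ pstar m
    & hfun m = j /\ #|D| = j.+1].
Proof.
move=> hA; elim=> [_|j IH hj].
  exists [set min_sys T], (min_sys T); split.
  - split; first by apply/set0Pn; exists (min_sys T); rewrite set11.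
    split; first by move=> a; rewrite inE => /eqP ->; apply/polestarP; exact: min_pstar.
    by move=> a b; rewrite !inE => /eqP -> /eqP ->; left; apply: le_refl.
  - by rewrite set11.
  - by move=> b; rewrite inE => /eqP ->; apply: le_refl.
  - by split; [apply: min_le | exact: min_pstar].
  - by split; [exact: h_min | rewrite cards1].
have [D [m [hD mD bm [mA hm] [em cD]]]] := IH (ltnW hj).
have nmA : m != A by apply/eqP => e; move: hj; rewrite -e em ltnn.
have [c [hc l1 l2 ec]] := cover_h hm hA mA nmA.
have cD' : c \notin D.
  apply/negP => cD0; have := mono hc hm (bm _ cD0); rewrite ec em; lia.
have allc : forall b, b \in c |: D -> sps_le b c.
  move=> b; rewrite !inE => /orP [/eqP ->|bD]; first exact: le_refl.
  exact: le_trans3 (chainP hD bD) hm hc (bm _ bD) l1.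
exists (c |: D), c; split.
- split; first by apply/set0Pn; exists c; rewrite setU11.
  split.
    move=> a; rewrite !inE => /orP [/eqP ->|aD]; first exact/polestarP.
    by case: hD => _ [h _]; apply: h.
  move=> a b; rewrite !inE => /orP [/eqP ->|aD] /orP [/eqP ->|bD].
  + by left; apply: le_refl.
  + by right; apply: allc; rewrite inE bD orbT.
  + by left; apply: allc; rewrite inE aD orbT.
  + by case: hD => _ [_ h]; apply: h.
- by rewrite setU11.
- exact: allc.
- by split.
- by split; [rewrite ec em | rewrite cardsU1 cD' cD].
Qed.

Lemma max_chain_card (C : {set sps T}) : 0 < #|T| -> maximal_chain C -> #|C| = #|T|.
Proof.
move=> hX [hC hmax].
have minC : min_sys T \in C.
  have h : is_chain (min_sys T |: C).
    case: (hC) => ne [pol cmp]; split; first by apply/set0Pn; exists (min_sys T); rewrite setU11.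
    split.
      move=> a; rewrite !inE => /orP [/eqP ->|aC]; [apply/polestarP; exact: min_pstar | exact: pol].
    move=> a b; rewrite !inE => /orP [/eqP ->|aC] /orP [/eqP ->|bC].
    + by left; apply: le_refl.
    + by left; apply: min_le (chainP hC bC).
    + by right; apply: min_le (chainP hC aC).
    + exact: cmp.
  by rewrite -(hmax _ h (subsetUr _ _)) setU11.
have maxC : max_sys T \in C.
  have h : is_chain (max_sys T |: C).
    case: (hC) => ne [pol cmp]; split; first by apply/set0Pn; exists (max_sys T); rewrite setU11.
    split.
      move=> a; rewrite !inE => /orP [/eqP ->|aC]; [apply/polestarP; exact: max_pstar | exact: pol].
    move=> a b; rewrite !inE => /orP [/eqP ->|aC] /orP [/eqP ->|bC].
    + by left; apply: le_refl.
    + by right; apply: le_max.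
    + by left; apply: le_max.
    + exact: cmp.
  by rewrite -(hmax _ h (subsetUr _ _)) setU11.
have hM := max_pstar hX.
apply/eqP; rewrite eqn_leq; apply/andP; split.
  have := chain_bound hM hC (fun b _ => le_max b); rewrite h_max //; lia.
have hit : forall k, k < #|T| -> exists2 a, a \in C & hfun a = k.
  move=> k hk; apply: NNPP => nk.
  have nk' : forall a, a \in C -> hfun a != k by move=> a aC; apply/eqP => e; apply: nk; exists a.
  have k0 : 0 < k.
    by move: (nk' _ minC); rewrite h_min; case: k {hk nk nk'}.
  have kT : k < #|T| - 1 by move: (nk' _ maxC); rewrite h_max //; lia.
  have Lmin : (fun a => (a \in C) && (hfun a < k)) (min_sys T) by rewrite /= minC h_min.
  have Umax : (fun a => (a \in C) && (k < hfun a)) (max_sys T) by rewrite /= maxC h_max.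
  case: (@arg_maxnP _ (min_sys T) (fun a => (a \in C) && (hfun a < k)) (@hfun T) Lmin) => a0 /andP [a0C a0k] amax.
  case: (@arg_minnP _ (max_sys T) (fun a => (a \in C) && (k < hfun a)) (@hfun T) Umax) => b0 /andP [b0C b0k] bmin.
  have ha0 := chainP hC a0C; have hb0 := chainP hC b0C.
  have lab : sps_le a0 b0 by apply: chain_le hC a0C b0C _; lia.
  have nab : a0 != b0 by apply/eqP => e; move: a0k b0k; rewrite e; lia.
  have [c [hc l1 l2 ec]] := cover_h ha0 hb0 lab nab.
  have cC : c \notin C.
    apply/negP => cC; move: (nk' _ cC); rewrite ec => hck.
    have : hfun c < k by rewrite ec; lia.
    rewrite ec => hlt; have := amax c; rewrite cC /= ec hlt => /(_ isT); lia.
  have h : is_chain (c |: C).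
    case: (hC) => ne [pol cmp]; split; first by apply/set0Pn; exists c; rewrite setU11.
    split.
      move=> a; rewrite !inE => /orP [/eqP ->|aC]; [exact/polestarP | exact: pol].
    have cmpc : forall d, d \in C -> sps_le d c \/ sps_le c d.
      move=> d dC; have hd := chainP hC dC.
      case: (ltngtP (hfun d) k) => [dk|kd|dk]; last by move: (nk' _ dC); rewrite dk eqxx.
      + left; have := amax d; rewrite dC dk => /(_ isT) da.
        exact: le_trans3 hd ha0 hc (chain_le hC dC a0C da) l1.
      + right; have := bmin d; rewrite dC kd => /(_ isT) bd.
        exact: le_trans3 hc hb0 hd l2 (chain_le hC b0C dC bd).
    move=> a b; rewrite !inE => /orP [/eqP ->|aC] /orP [/eqP ->|bC].
    + by left; apply: le_refl.
    + by case: (cmpc _ bC); [right|left].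
    + exact: cmpc.
    + exact: cmp.
  by move: cC; rewrite -(hmax _ h (subsetUr _ _)) setU11.
pose f (a : sps T) : 'I_#|T| := insubd (Ordinal hX) (hfun a).
have : [set: 'I_#|T|] \subset f @: C.
  apply/subsetP => i _; have [a aC ea] := hit i (ltn_ord i).
  apply/imsetP; exists a => //; apply: val_inj; rewrite /f val_insubd ea.
  by rewrite ltn_ord.
move/subset_leq_card; rewrite cardsT card_ord => h1.
exact: leq_trans h1 (leq_imset_card _ _).
Qed.

End Proof.

Theorem mainTheorem8 (T : finType) (hX : 0 < #|T|) :
  (* partial order on polestar systems *)
  (forall A : sps T, polestar A -> sps_le A A) /\
  (forall A B : sps T, polestar A -> polestar B -> sps_le A B -> sps_le B A -> A = B) /\
  (forall A B C : sps T, polestar A -> polestar B -> polestar C ->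
     sps_le A B -> sps_le B C -> sps_le A C) /\
  (* bounded, with the given minimum and maximum *)
  polestar (min_sys T) /\ polestar (max_sys T) /\
  (forall A : sps T, polestar A -> sps_le (min_sys T) A /\ sps_le A (max_sys T)) /\
  (* graded *)
  graded T /\
  (* height function *)
  (forall A : sps T, polestar A -> is_height A (hfun A) /\ hfun A <= #|T| - 1).
Proof.
split; first by move=> A _; apply: le_refl.
split; first by move=> A B /polestarP hA /polestarP hB; apply: antisym.
split; first by move=> A B C /polestarP hA /polestarP hB /polestarP hC; apply: le_trans3.
split; first by apply/polestarP; apply: min_pstar.
split; first by apply/polestarP; apply: max_pstar.
split; first by move=> A /polestarP hA; split; [apply: min_le | apply: le_max].
split.
  move=> C1 C2 m1 m2; rewrite /chain_length.
  by rewrite (max_chain_card hX m1) (max_chain_card hX m2).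
move=> A /polestarP hA; split; last first.
  by rewrite -h_max //; apply: mono hA (max_pstar hX) (le_max A).
split.
  have [D [m [hD mD bm [mA hm] [em cD]]]] := build hA (leqnn (hfun A)).
  exists D; split => //; last by rewrite /chain_length cD.
  by move=> b bD; apply: le_trans3 (chainP hD bD) hm hA (bm _ bD) mA.
move=> C hC hle; rewrite /chain_length; have := chain_bound hA hC hle; lia.
Qed.
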